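(* Let $X$ be a real random variable with density $p$, $\mathbb{E}X=0$, $\mathrm{Var}(X)=1$, $\mathbb{E}|X|^s<\infty$ for some $s>2$, and suppose $\|p-\phi\|_2\le1$. Then there exist $C_1,C_2>0$ such that \[ D(X)\le C_1\big(\|p-\phi\|_1+\|p-\phi\|_2\big)+C_2(\mathbb{E}|X|^s)^{2/s}\big(\|p-\phi\|_1+\|p-\phi\|_2\big)^{1-2/s}. \]
   Context: $\phi(x)=(2\pi)^{-1/2}e^{-x^2/2}$. $D(X)$ denotes the Kullback–Leibler divergence of $X$ from a Gaussian with the same mean and variance as $X$; here $D(X)=\int p\ln(p/\phi)$. $\|\cdot\|_q$ is the $L^q(\mathbb{R})$ norm. *)

(* Defs.v *)
From HB Require Import structures.
From mathcomp Require Import all_boot all_order all_algebra.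
From mathcomp Require Import all_classical all_reals all_analysis.
Set Implicit Arguments. Unset Strict Implicit. Unset Printing Implicit Defensive.
Import Order.TTheory GRing.Theory Num.Theory.
Local Open Scope ring_scope.

Section defs.
Variable R : realType.
Local Notation mu := (@lebesgue_measure R).

Definition phi (x : R) : R := expR (- (x ^+ 2) / 2) / Num.sqrt (2 * pi).

Definition is_density (p : R -> R) : Prop :=
  measurable_fun [set: R] p /\ (forall x, 0 <= p x) /\
  (\int[mu]_x (p x)%:E = 1)%E.

Definition mean_zero (p : R -> R) : Prop :=
  mu.-integrable [set: R] (fun x => (x * p x)%:E) /\
  (\int[mu]_x (x * p x)%:E = 0)%E.

(* E X^2 = 1; together with E X = 0 this is Var(X) = 1 *)
Definition second_moment_one (p : R -> R) : Prop :=
  (\int[mu]_x (x ^+ 2 * p x)%:E = 1)%E.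

Definition abs_moment (s : R) (p : R -> R) : \bar R :=
  (\int[mu]_x ((`|x| `^ s) * p x)%:E)%E.

Definition Lq_dist (q : R) (p : R -> R) : \bar R :=
  Lnorm mu q%:E (fun x => (p x - phi x)%:E).

(* D(X) = int p ln (p/phi)  (with 0 ln 0 = 0; extended-real valued) *)
Definition Dgauss (p : R -> R) : \bar R :=
  (\int[mu]_x (p x * ln (p x / phi x))%:E)%E.

End defs.

(* Main.v *)
Set Warnings "-all".
Require Import Defs.
From HB Require Import structures.
From mathcomp Require Import all_boot all_order all_algebra.
From mathcomp Require Import all_classical all_reals all_analysis.
From mathcomp Require Import measurable_realfun.
From mathcomp Require Import ring lra.
Import Order.TTheory GRing.Theory Num.Theory.
Local Open Scope ring_scope.

Section reals.
Variable R : realType.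
Implicit Types x y T t : R.

Definition sq2pi : R := Num.sqrt (2 * pi).
Definition kap : R := sq2pi^-1.
Definition cc : R := ln sq2pi.
Definition LL : R := 2^-1 + `|cc|.
Definition NN T x : R := normal_pdf T 1 x + normal_pdf (- T) 1 x.

Lemma sq2pi_gt0 : 0 < sq2pi.
Proof. by rewrite sqrtr_gt0 mulr_gt0 ?pi_gt0. Qed.

Lemma phiE x : phi x = kap * expR (- (x ^+ 2) / 2).
Proof. by rewrite /phi /kap mulrC. Qed.

Lemma phi_gt0 x : 0 < phi x.
Proof. by rewrite /phi divr_gt0 ?expR_gt0 ?sq2pi_gt0. Qed.

Lemma phi_le_kap x : phi x <= kap.
Proof.
have k0 : 0 <= kap by rewrite invr_ge0 ltW // sq2pi_gt0.
rewrite phiE ler_piMr // expR_le1.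
by rewrite mulNr oppr_le0 divr_ge0 ?sqr_ge0.
Qed.

Lemma ln_phi x : ln (phi x) = - (x ^+ 2 / 2) - cc.
Proof.
rewrite /phi ln_div ?expRK ?mulNr //; rewrite posrE ?expR_gt0 ?sq2pi_gt0 //.
Qed.

Lemma NN_ge0 T x : 0 <= NN T x.
Proof. by rewrite addr_ge0 ?normal_pdf_ge0. Qed.

Lemma normal_pdf1E m x : normal_pdf m 1 x = kap * expR (- ((x - m) ^+ 2) / 2).
Proof.
rewrite normal_pdfE ?oner_eq0 // /normal_peak /normal_fun /kap /sq2pi.
by rewrite expr1n mul1r mulr_natl.
Qed.

Lemma phi_tail T x : 0 <= T -> T <= `|x| ->
  phi x <= expR (- (T ^+ 2) / 2) * NN T x.
Proof.
move=> T0 Tx; rewrite /NN mulrDr.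
have k0 : 0 <= kap by rewrite invr_ge0 ltW // sq2pi_gt0.
have key : forall m, T ^+ 2 + (x - m) ^+ 2 <= x ^+ 2 ->
    phi x <= expR (- (T ^+ 2) / 2) * normal_pdf m 1 x.
  move=> m hm; rewrite normal_pdf1E phiE mulrCA; apply: ler_wpM2l => //.
  rewrite -expRD ler_expR.
  rewrite !mulNr -opprD lerN2 -mulrDl; apply: ler_wpM2r => //.
have E : forall m, T ^+ 2 + (x - m) ^+ 2 = x ^+ 2 - 2 * (x * m - T ^+ 2) + (m ^+ 2 - T ^+ 2).
  by move=> m; ring.
have [x0|x0] := lerP 0 x.
  rewrite ger0_norm // in Tx.
  apply: le_trans (key T _) _; last by rewrite lerDl mulr_ge0 ?expR_ge0 ?normal_pdf_ge0.
  rewrite E subrr addr0 lerBlDr lerDl mulr_ge0 // subr_ge0 expr2 ler_pM //.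
rewrite ltr0_norm // in Tx.
apply: le_trans (key (- T) _) _; last by rewrite lerDr mulr_ge0 ?expR_ge0 ?normal_pdf_ge0.
rewrite E sqrrN subrr addr0 lerBlDr lerDl mulr_ge0 // subr_ge0 expr2 mulrN -mulNr ler_pM //.
Qed.

Lemma phi_mid T x : `|x| <= T -> (phi x)^-1 <= sq2pi * expR (T ^+ 2 / 2).
Proof.
move=> xT; rewrite /phi invf_div mulNr expRN invrK.
apply: ler_wpM2l; first exact: ltW (sq2pi_gt0).
rewrite ler_expR ler_wpM2r ?invr_ge0 ?ler0n //.
have e : `|x| ^+ 2 = x ^+ 2 by rewrite -normrX ger0_norm // sqr_ge0.
have := normr_ge0 x; rewrite -e; nra.
Qed.

Lemma young s x t : 2 <= s -> 0 < t ->
  x ^+ 2 <= t ^+ 2 * (`|x| `^ s / t `^ s) + t ^+ 2.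
Proof.
move=> s2 t0.
have tsgt0 : 0 < t `^ s by apply: powR_gt0.
have [xt|tx] := lerP `|x| t.
  have : x ^+ 2 <= t ^+ 2.
    have e : `|x| ^+ 2 = x ^+ 2 by rewrite -normrX ger0_norm // sqr_ge0.
    have := normr_ge0 x; rewrite -e; nra.
  move=> h; apply: le_trans h _; rewrite lerDr mulr_ge0 ?sqr_ge0 // divr_ge0 ?powR_ge0 ?ltW //.
have r1 : 1 <= `|x| / t by rewrite ler_pdivlMr // mul1r ltW.
have h1 : (`|x| / t) ^+ 2 <= (`|x| / t) `^ s.
  rewrite -powR_mulrn ?(le_trans ler01) //; exact: ler_powR.
have h2 : (`|x| / t) `^ s = `|x| `^ s / t `^ s.
  have := powRM s (divr_ge0 (normr_ge0 x) (ltW t0)) (ltW t0).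
  rewrite divfK ?gt_eqF // => ->; rewrite mulfK ?gt_eqF //.
have e2 : x ^+ 2 = t ^+ 2 * (`|x| / t) ^+ 2.
  by rewrite exprMn -normrX mulrCA exprVn mulfV ?mulr1 ?expf_neq0 ?gt_eqF // ger0_norm ?sqr_ge0.
rewrite -h2 e2; have := sqr_ge0 t; nra.
Qed.

Lemma ln_le_sub1 y : 0 < y -> ln y <= y - 1.
Proof.
move=> y0; have := @le_ln1Dx R (y - 1); rewrite addrCA subrr addr0; apply.
lra.
Qed.

Lemma pw s p x T t : 2 <= s -> 0 <= p -> 1 <= T -> 0 < t ->
  let rhs := (1 + LL * t ^+ 2) * `|p - phi x| + (2 + sq2pi * expR (T ^+ 2 / 2)) * (p - phi x) ^+ 2
  + (2 * kap + LL * t ^+ 2) * (expR (- (T ^+ 2) / 2) * NN T x)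
  + LL * (t ^+ 2 / t `^ s) * (`|x| `^ s * p) in
  0 <= rhs /\ p * ln (p / phi x) <= rhs.
Proof.
move=> s2 p0 T1 t0 rhs; rewrite /rhs.
set h := p - phi x; set G := expR (- (T ^+ 2) / 2) * NN T x.
have G0 : 0 <= G by rewrite mulr_ge0 ?expR_ge0 ?NN_ge0.
have k0 : 0 < kap by rewrite invr_gt0 sq2pi_gt0.
have L0 : 0 <= LL by rewrite addr_ge0 ?invr_ge0 ?ler0n.
have t2 : 0 <= t ^+ 2 by rewrite sqr_ge0.
have ts0 : 0 <= t ^+ 2 / t `^ s by rewrite divr_ge0 ?powR_ge0.
have xs0 : 0 <= `|x| `^ s * p by rewrite mulr_ge0 ?powR_ge0.
have e0 : 0 <= expR (T ^+ 2 / 2) by rewrite expR_ge0.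
have sq0 : 0 < sq2pi := sq2pi_gt0.
have ph0 := phi_gt0 x.
have h0 : 0 <= `|h| by [].
have hh0 : 0 <= h ^+ 2 by rewrite sqr_ge0.
have habs : h <= `|h| by rewrite ler_norm.
have rhs0 : 0 <= (1 + LL * t ^+ 2) * `|h| + (2 + sq2pi * expR (T ^+ 2 / 2)) * h ^+ 2
  + (2 * kap + LL * t ^+ 2) * G + LL * (t ^+ 2 / t `^ s) * (`|x| `^ s * p).
  have r1 : 0 <= (1 + LL * t ^+ 2) * `|h| by rewrite mulr_ge0 // addr_ge0 // mulr_ge0.
  have r2 : 0 <= (2 + sq2pi * expR (T ^+ 2 / 2)) * h ^+ 2.
    by rewrite mulr_ge0 // addr_ge0 ?ler0n // mulr_ge0 // ltW.
  have r3 : 0 <= (2 * kap + LL * t ^+ 2) * G.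
    by rewrite mulr_ge0 // addr_ge0 // mulr_ge0 ?ler0n // ltW.
  have r4 : 0 <= LL * (t ^+ 2 / t `^ s) * (`|x| `^ s * p) by rewrite mulr_ge0 // mulr_ge0.
  lra.
split => //.
have [f0|f0] := lerP (p * ln (p / phi x)) 0.
  exact: le_trans f0 rhs0.
have pp : 0 < p.
  rewrite lt_neqAle p0 andbT; apply/eqP => pe; move: f0; rewrite -pe mul0r ltxx //.
have [xT|Tx] := lerP `|x| T.
  have l1 : p * ln (p / phi x) <= p * (p / phi x - 1).
    by apply: ler_wpM2l => //; apply: ln_le_sub1; rewrite divr_gt0.
  have l2 : p * (p / phi x - 1) = h + h ^+ 2 * (phi x)^-1.
    rewrite /h; field; rewrite gt_eqF //.
  have l3 : h ^+ 2 * (phi x)^-1 <= h ^+ 2 * (sq2pi * expR (T ^+ 2 / 2)).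
    by apply: ler_wpM2l => //; exact: phi_mid.
  apply: le_trans l1 _; rewrite l2.
  have a1 : 0 <= LL * t ^+ 2 * `|h| by rewrite mulr_ge0 // mulr_ge0.
  have a2 : 0 <= (2 * kap + LL * t ^+ 2) * G.
    by rewrite mulr_ge0 // addr_ge0 // mulr_ge0 ?ler0n // ltW.
  have a3 : 0 <= LL * (t ^+ 2 / t `^ s) * (`|x| `^ s * p) by rewrite mulr_ge0 // mulr_ge0.
  nra.
have tail := @phi_tail T x (le_trans ler01 T1) (ltW Tx).
rewrite -/G in tail.
have lnp : ln (p / phi x) = ln p - ln (phi x) by rewrite ln_div ?posrE.
have l1 : p * ln p <= p ^+ 2.
  have hl := @ln_le_sub1 p pp; nra.
have l2 : p * cc <= `|cc| * (p * x ^+ 2).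
  have x1 : 1 <= x ^+ 2.
    have e : `|x| ^+ 2 = x ^+ 2 by rewrite -normrX ger0_norm // sqr_ge0.
    rewrite -e; have := normr_ge0 x; nra.
  have q1 : p * cc <= p * `|cc| by apply: ler_wpM2l => //; exact: ler_norm.
  apply: le_trans q1 _; rewrite mulrC; apply: ler_wpM2l => //; nra.
have l3 : p * x ^+ 2 <= (t ^+ 2 / t `^ s) * (`|x| `^ s * p) + t ^+ 2 * p.
  have := @young s x t s2 t0; nra.
have l4 : phi x ^+ 2 <= kap * G.
  have := phi_le_kap x; nra.
have ep : p = phi x + h by rewrite /h addrC subrK.
rewrite lnp ln_phi.
have -> : p * (ln p - (- (x ^+ 2 / 2) - cc)) = p * ln p + 2^-1 * (p * x ^+ 2) + p * cc.
  by field.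
rewrite /LL.
have a2 : 0 <= p * x ^+ 2 by rewrite mulr_ge0 ?sqr_ge0.
have a3 : 0 <= `|cc| by [].
have a4 : p ^+ 2 <= 2 * h ^+ 2 + 2 * phi x ^+ 2 by rewrite ep; have := sqr_ge0 (phi x - h); nra.
have a5 : p <= `|h| + G by rewrite ep; lra.
have a6 : `|cc| * (p * x ^+ 2) <= `|cc| * ((t ^+ 2 / t `^ s) * (`|x| `^ s * p) + t ^+ 2 * `|h| + t ^+ 2 * G).
  apply: ler_wpM2l => //; nra.
have a7 : 2^-1 * (p * x ^+ 2) <= 2^-1 * ((t ^+ 2 / t `^ s) * (`|x| `^ s * p) + t ^+ 2 * `|h| + t ^+ 2 * G).
  apply: ler_wpM2l; rewrite ?invr_ge0 ?ler0n //; nra.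
have a8 : 0 <= sq2pi * expR (T ^+ 2 / 2) * h ^+ 2 by rewrite mulr_ge0 // mulr_ge0 // ltW.
nra.
Qed.

Local Notation mu := (@lebesgue_measure R).


Lemma phi_normal : @phi R = normal_pdf 0 1.
Proof. by apply/funext => x; rewrite normal_pdf1E subr0 phiE. Qed.

Lemma meas_phi : measurable_fun setT (@phi R).
Proof. rewrite phi_normal; exact: measurable_normal_pdf. Qed.

Lemma int_phi : (\int[mu]_x (phi x)%:E = 1)%E.
Proof. rewrite phi_normal; exact: integral_normal_pdf. Qed.

Lemma meas_NN T : measurable_fun setT (NN T).
Proof. by apply: measurable_funD; exact: measurable_normal_pdf. Qed.

Lemma int_NN T : (\int[mu]_x (NN T x)%:E = 2%:E)%E.
Proof.
rewrite /NN; under eq_integral do rewrite EFinD.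
rewrite ge0_integralD //; last 4 first.
- by move=> x _; rewrite lee_fin normal_pdf_ge0.
- by apply/measurable_EFinP; exact: measurable_normal_pdf.
- by move=> x _; rewrite lee_fin normal_pdf_ge0.
- by apply/measurable_EFinP; exact: measurable_normal_pdf.
by rewrite !integral_normal_pdf.
Qed.

Lemma intD (f g : R -> R) : (forall x, 0 <= f x) -> (forall x, 0 <= g x) ->
  measurable_fun setT f -> measurable_fun setT g ->
  (\int[mu]_x (f x + g x)%:E = \int[mu]_x (f x)%:E + \int[mu]_x (g x)%:E)%E.
Proof.
move=> f0 g0 mf mg; under eq_integral do rewrite EFinD.
rewrite ge0_integralD //.
- by move=> x _; rewrite lee_fin.
- exact/measurable_EFinP.
- by move=> x _; rewrite lee_fin.
- exact/measurable_EFinP.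
Qed.

Lemma intZ (f : R -> R) k : (forall x, 0 <= f x) -> 0 <= k ->
  measurable_fun setT f ->
  (\int[mu]_x (k * f x)%:E = k%:E * \int[mu]_x (f x)%:E)%E.
Proof.
move=> f0 k0 mf; under eq_integral do rewrite EFinM.
rewrite ge0_integralZl_EFin //.
- by move=> x _; rewrite lee_fin.
- exact/measurable_EFinP.
Qed.

Lemma phiV x : (phi x)^-1 = sq2pi * expR (x ^+ 2 / 2).
Proof. by rewrite /phi invf_div mulNr expRN invrK. Qed.

Lemma meas_F (p : R -> R) : measurable_fun setT p ->
  measurable_fun setT (fun x => p x * ln (p x / phi x)).
Proof.
move=> mp.
have -> : (fun x => p x * ln (p x / phi x)) =
    (fun x => p x * ln (p x * (sq2pi * expR (x ^+ 2 / 2)))).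
  by apply/funext => x; rewrite phiV.
apply: measurable_funM => //.
apply: measurableT_comp; first exact: measurable_ln.
apply: measurable_funM => //.
apply: measurable_funM => //.
apply: measurableT_comp; first exact: measurable_expR.
apply: measurable_funM => //.
Qed.

Lemma meas_A (p : R -> R) : measurable_fun setT p ->
  measurable_fun setT (fun x => `|p x - phi x|).
Proof.
move=> mp; apply: measurableT_comp; first exact: normr_measurable.
by apply: measurable_funB => //; exact: meas_phi.
Qed.

Lemma meas_B (p : R -> R) : measurable_fun setT p ->
  measurable_fun setT (fun x => (p x - phi x) ^+ 2).
Proof.
move=> mp; apply: measurable_funX.
by apply: measurable_funB => //; exact: meas_phi.
Qed.

Lemma meas_E s (p : R -> R) : measurable_fun setT p ->
  measurable_fun setT (fun x => `|x| `^ s * p x).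
Proof.
move=> mp; apply: measurable_funM => //.
have := (measurableT_comp (measurable_powR s) (@normr_measurable R setT)).
by move=> H; exact: H.
Qed.

Lemma D_le s (p : R -> R) T t : 2 <= s -> is_density p -> 1 <= T -> 0 < t ->
  (Dgauss p <=
   (1 + LL * t ^+ 2)%:E * (\int[mu]_x (`|p x - phi x|)%:E)
   + (2 + sq2pi * expR (T ^+ 2 / 2))%:E * (\int[mu]_x ((p x - phi x) ^+ 2)%:E)
   + ((2 * kap + LL * t ^+ 2) * expR (- (T ^+ 2) / 2))%:E * 2%:E
   + (LL * (t ^+ 2 / t `^ s))%:E * (\int[mu]_x (`|x| `^ s * p x)%:E))%E.
Proof.
move=> s2 [mp [p0 _]] T1 t0.
have k0 : 0 < kap by rewrite invr_gt0 sq2pi_gt0.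
have L0 : 0 <= LL by rewrite addr_ge0 ?invr_ge0 ?ler0n.
set F := fun x => p x * ln (p x / phi x).
set G := fun x => (1 + LL * t ^+ 2) * `|p x - phi x| + (2 + sq2pi * expR (T ^+ 2 / 2)) * (p x - phi x) ^+ 2
  + ((2 * kap + LL * t ^+ 2) * expR (- (T ^+ 2) / 2)) * NN T x
  + LL * (t ^+ 2 / t `^ s) * (`|x| `^ s * p x).
have hpw : forall x, 0 <= G x /\ F x <= G x.
  move=> x; have := @pw s (p x) x T t s2 (p0 x) T1 t0.
  by rewrite /G /F -!mulrA.
have mF : measurable_fun setT F by exact: meas_F.
have mA := @meas_A p mp; have mB := @meas_B p mp; have mE := @meas_E s p mp.
have mN := meas_NN T.
have A0 : forall x, 0 <= `|p x - phi x| by [].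
have B0 : forall x, 0 <= (p x - phi x) ^+ 2 by move=> x; rewrite sqr_ge0.
have E0 : forall x, 0 <= `|x| `^ s * p x by move=> x; rewrite mulr_ge0 ?powR_ge0.
have N0 : forall x, 0 <= NN T x by move=> x; exact: NN_ge0.
have c1 : 0 <= 1 + LL * t ^+ 2 by rewrite addr_ge0 // mulr_ge0 // sqr_ge0.
have c2 : 0 <= 2 + sq2pi * expR (T ^+ 2 / 2) by rewrite addr_ge0 // mulr_ge0 ?expR_ge0 // ltW // sq2pi_gt0.
have c3 : 0 <= (2 * kap + LL * t ^+ 2) * expR (- (T ^+ 2) / 2).
  by rewrite mulr_ge0 ?expR_ge0 // addr_ge0 // mulr_ge0 ?sqr_ge0 // ltW.
have c4 : 0 <= LL * (t ^+ 2 / t `^ s) by rewrite mulr_ge0 // divr_ge0 ?sqr_ge0 ?powR_ge0.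
have step1 : (Dgauss p <= \int[mu]_x (G x)%:E)%E.
  have gen : forall a b : \bar R, (0 <= b)%E -> (a - b <= a)%E.
    by move=> a b b0; rewrite -[leRHS](sube0 a); apply: leeB.
  rewrite /Dgauss integralE.
  apply: le_trans (gen _ _ _) _; first by apply: integral_ge0 => x _; exact: funeneg_ge0.
  apply: ge0_le_integral => //.
  - by apply: measurable_funepos; exact/measurable_EFinP.
  - apply/measurable_EFinP; rewrite /G.
    apply: measurable_funD; last by apply: measurable_funM.
    apply: measurable_funD; last by apply: measurable_funM.
    by apply: measurable_funD; apply: measurable_funM.
  - move=> x _; rewrite funeposE ge_max !lee_fin.
    by have [? ?] := hpw x; apply/andP; split.
apply: le_trans step1 _; rewrite le_eqVlt; apply/orP; left; apply/eqP.
rewrite /G intD //; last 4 first.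
- by move=> x; rewrite !addr_ge0 // mulr_ge0.
- by move=> x; rewrite mulr_ge0.
- apply: measurable_funD; last by apply: measurable_funM.
  by apply: measurable_funD; apply: measurable_funM.
- by apply: measurable_funM.
rewrite intD //; last 4 first.
- by move=> x; rewrite !addr_ge0 // mulr_ge0.
- by move=> x; rewrite mulr_ge0.
- by apply: measurable_funD; apply: measurable_funM.
- by apply: measurable_funM.
rewrite intD //; last 4 first.
- by move=> x; rewrite mulr_ge0.
- by move=> x; rewrite mulr_ge0.
- by apply: measurable_funM.
- by apply: measurable_funM.
by rewrite !intZ // int_NN.
Qed.

Lemma Lq1E (p : R -> R) : Lq_dist 1 p = (\int[mu]_x (`|p x - phi x|)%:E)%E.
Proof. by rewrite /Lq_dist Lnorm1; apply: eq_integral => x _; rewrite abse_EFin. Qed.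

Lemma Lq2E (p : R -> R) : (Lq_dist 2 p `^ 2)%E = (\int[mu]_x ((p x - phi x) ^+ 2)%:E)%E.
Proof.
rewrite /Lq_dist poweR_Lnorm ?pnatr_eq0 //; apply: eq_integral => x _.
rewrite abse_EFin poweR_EFin powR_mulrn //.
by rewrite -normrX ger0_norm // sqr_ge0.
Qed.

Lemma Lq1_le2 (p : R -> R) : is_density p -> (Lq_dist 1 p <= 2%:E)%E.
Proof.
move=> [mp [p0 ip]]; rewrite Lq1E.
apply: le_trans (_ : _ <= \int[mu]_x (p x + phi x)%:E)%E _.
  apply: ge0_le_integral => //.
  - by apply/measurable_EFinP; exact: (@meas_A p mp).
  - by apply/measurable_EFinP; apply: measurable_funD => //; exact: meas_phi.
  - move=> x _; rewrite lee_fin; apply: le_trans (ler_normB _ _) _.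
    by rewrite !ger0_norm // ltW // phi_gt0.
rewrite intD //.
- by rewrite ip int_phi.
- by move=> x; exact: ltW (phi_gt0 x).
- exact: meas_phi.
Qed.

Lemma moment_lb s (p : R -> R) t : 2 <= s -> 0 < t -> is_density p -> second_moment_one p ->
  (1 <= (t ^+ 2 / t `^ s)%:E * abs_moment s p + (t ^+ 2)%:E)%E.
Proof.
move=> s2 t0 [mp [p0 ip]] hm.
have c4 : 0 <= t ^+ 2 / t `^ s by rewrite divr_ge0 ?sqr_ge0 ?powR_ge0.
rewrite -hm /abs_moment.
apply: le_trans (_ : _ <= \int[mu]_x ((t ^+ 2 / t `^ s) * (`|x| `^ s * p x) + t ^+ 2 * p x)%:E)%E _.
  have m1 : measurable_fun setT (fun x => (x ^+ 2 * p x)%:E).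
    by apply/measurable_EFinP; apply: measurable_funM.
  have m2 : measurable_fun setT (fun x => ((t ^+ 2 / t `^ s) * (`|x| `^ s * p x) + t ^+ 2 * p x)%:E).
    apply/measurable_EFinP; apply: measurable_funD; apply: measurable_funM => //.
    exact: meas_E.
  apply: ge0_le_integral => //.
  - by move=> x _; rewrite lee_fin mulr_ge0 ?sqr_ge0.
  - move=> x _; rewrite lee_fin.
    have := @young s x t s2 t0; have := p0 x; rewrite mulrA; nra.
have mE := @meas_E s p mp.
rewrite intD //; last 4 first.
- by move=> x; rewrite mulr_ge0 // mulr_ge0 ?powR_ge0.
- by move=> x; rewrite mulr_ge0 ?sqr_ge0.
- by apply: measurable_funM.
- by apply: measurable_funM.
rewrite intZ //; last by move=> x; rewrite mulr_ge0 ?powR_ge0.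
rewrite intZ ?sqr_ge0 // ip mule1 //.
Qed.

Definition u0 : R := expR (- 2^-1).
Definition C1 : R := 3 + sq2pi * (1 + u0^-1) + 4 * kap.
Definition C2 : R := 4 * LL.

Lemma u0_gt0 : 0 < u0. Proof. exact: expR_gt0. Qed.
Lemma u0_le1 : u0 <= 1. Proof. by rewrite /u0 expR_le1 oppr_le0 invr_ge0 ler0n. Qed.

Lemma C1_gt0 : 0 < C1.
Proof.
rewrite /C1; have := sq2pi_gt0; have := u0_gt0 => h1 h2.
have : 0 < kap by rewrite invr_gt0.
have : 0 < u0^-1 by rewrite invr_gt0.
move=> h3 h4; have : 0 < sq2pi * (1 + u0^-1) by rewrite mulr_gt0 // addr_gt0.
lra.
Qed.

Lemma C2_gt0 : 0 < C2.
Proof.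
rewrite /C2 /LL; have := normr_ge0 cc; have : 0 < 2^-1 :> R by rewrite invr_gt0 ltr0n.
lra.
Qed.

Lemma alg_core s a b m w u t T : 0 <= a <= w -> 0 <= b <= w -> b <= 1 ->
  0 < u <= w -> b ^+ 2 * u^-1 <= w * (1 + u0^-1) -> 0 < t ->
  expR (T ^+ 2 / 2) = u^-1 -> expR (- (T ^+ 2) / 2) = u ->
  t ^+ 2 / t `^ s * m = t ^+ 2 * w ->
  (1 + LL * t ^+ 2) * a + (2 + sq2pi * expR (T ^+ 2 / 2)) * b ^+ 2
  + ((2 * kap + LL * t ^+ 2) * expR (- (T ^+ 2) / 2)) * 2
  + LL * (t ^+ 2 / t `^ s) * m <= C1 * w + C2 * (t ^+ 2 * w).
Proof.
move=> /andP[a0 aw] /andP[b0 bw] b1 /andP[u0' uw] hb t0 e1 e2 e3.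
rewrite e1 e2 /C1 /C2.
have -> : LL * (t ^+ 2 / t `^ s) * m = LL * (t ^+ 2 * w) by rewrite -e3 !mulrA.
have L0 : 0 <= LL by rewrite addr_ge0 ?invr_ge0 ?ler0n.
have t2 : 0 <= t ^+ 2 by rewrite sqr_ge0.
have k0 : 0 < kap by rewrite invr_gt0 sq2pi_gt0.
have sq0 := sq2pi_gt0.
have h1 : LL * t ^+ 2 * a <= LL * t ^+ 2 * w by rewrite ler_wpM2l // mulr_ge0.
have h2 : LL * t ^+ 2 * u <= LL * t ^+ 2 * w by rewrite ler_wpM2l // ?mulr_ge0 // ltW.
have h3 : sq2pi * (b ^+ 2 * u^-1) <= sq2pi * (w * (1 + u0^-1)) by rewrite ler_wpM2l // ltW.
have h4 : kap * u <= kap * w by rewrite ler_wpM2l // ltW.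
have h5 : b ^+ 2 <= w by nra.
have -> : (2 + sq2pi * u^-1) * b ^+ 2 = 2 * b ^+ 2 + sq2pi * (b ^+ 2 * u^-1) by ring.
lra.
Qed.

Lemma choose_T u : 0 < u <= u0 -> exists T, 1 <= T /\
  expR (T ^+ 2 / 2) = u^-1 /\ expR (- (T ^+ 2) / 2) = u.
Proof.
move=> /andP[u0' uu0].
have lnu : ln u <= - 2^-1.
  by rewrite -(expRK (- 2^-1)) ler_ln ?posrE ?expR_gt0.
have q0 : 0 <= -2 * ln u by lra.
exists (Num.sqrt (-2 * ln u)).
have sq : Num.sqrt (-2 * ln u) ^+ 2 = -2 * ln u by rewrite sqr_sqrtr.
rewrite sq; split; last split.
- have s0 := sqrtr_ge0 (-2 * ln u).
  have : 1 <= Num.sqrt (-2 * ln u) ^+ 2 by rewrite sq; lra.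
  nra.
- have -> : -2 * ln u / 2 = - ln u by field.
  by rewrite expRN lnK // posrE.
- have -> : - (-2 * ln u) / 2 = ln u by field.
  by rewrite lnK // posrE.
Qed.

Lemma choose_t (s m w : R) : 2 < s -> 0 < m -> 0 < w ->
  let t := (m / w) `^ (s^-1) in
  [/\ 0 < t, t ^+ 2 / t `^ s * m = t ^+ 2 * w &
      t ^+ 2 * w = m `^ (2 / s) * w `^ (1 - 2 / s)].
Proof.
move=> s2 m0 w0 t.
have s0 : s != 0 by rewrite gt_eqF // (lt_trans _ s2) // ltr0n.
have mw : 0 < m / w by rewrite divr_gt0.
have t0 : 0 < t by rewrite powR_gt0.
have ts : t `^ s = m / w by rewrite /t -powRrM mulVf // powRr1 // ltW.
have t2 : t ^+ 2 = (m / w) `^ (2 / s).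
  by rewrite -(powR_mulrn 2 (ltW t0)) /t -powRrM [s^-1 * _]mulrC.
split => //.
  by rewrite ts; field; rewrite !gt_eqF.
rewrite t2 powRM ?invr_ge0 ?ltW // -[w^-1](powR_inv1 (ltW w0)) -powRrM mulN1r powRN.
rewrite -mulrA; congr (_ * _).
have e : w `^ (1 - 2 / s) = w / w `^ (2 / s).
  by rewrite powRB ?(gt_eqF w0) ?implybT // powRr1 // ltW.
by rewrite e mulrC.
Qed.

Lemma small_w (C K r e : R) : 0 < r < 1 -> 0 <= C -> 0 <= K -> 0 < e ->
  exists w, 0 < w /\ C * w + K * w `^ r <= e.
Proof.
move=> /andP[r0 r1] C0 K0 e0.
set z := e / (C + K + 1).
have D0 : 0 < C + K + 1 by lra.
have z0 : 0 < z by rewrite divr_gt0.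
have zK : (C + K + 1) * z = e by rewrite /z mulrC divfK // gt_eqF.
set y := z `^ r^-1.
have y0 : 0 < y by rewrite powR_gt0.
have yr : y `^ r = z by rewrite /y -powRrM mulVf ?gt_eqF // powRr1 // ltW.
have [y1|y1] := lerP y 1.
  exists y; split => //.
  have : y <= y `^ r by apply: ger1_powR; rewrite ?y0 ?y1 // ltW.
  rewrite yr => yz.
  have : C * y <= C * z by rewrite ler_wpM2l.
  nra.
exists 1; split; first exact: ltr01.
rewrite powR1 /= mulr1.
have : 1 <= z.
  apply: (@le_trans _ _ (1 `^ r)); first by rewrite powR1.
  rewrite -yr; apply: ge0_ler_powR; rewrite ?nnegrE ?ler01 ?ltW //.
nra.
Qed.

End reals.

Theorem corollary2p4 (R : realType) (s : R) (hs : 2 < s) :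
  exists C1 C2 : R, 0 < C1 /\ 0 < C2 /\
  forall p : R -> R,
    is_density p -> mean_zero p -> second_moment_one p ->
    (abs_moment s p < +oo)%E ->
    (Lq_dist 2 p <= 1)%E ->
    (Dgauss p <= C1%:E * (Lq_dist 1 p + Lq_dist 2 p)
       + C2%:E * (abs_moment s p `^ (2 / s))
           * ((Lq_dist 1 p + Lq_dist 2 p) `^ (1 - 2 / s)))%E.
Proof.
exists (C1 R), (C2 R); split; first exact: C1_gt0.
split; first exact: C2_gt0.
move=> p hp _ hm Ms L2.
have s2 : 2 <= s := ltW hs.
have s0 : 0 < s by apply: lt_trans hs; rewrite ltr0n.
have [mp [p0 ip]] := hp.
have L1fin : Lq_dist 1 p \is a fin_num.
  by rewrite ge0_fin_numE ?Lnorm_ge0 // (le_lt_trans (@Lq1_le2 R p hp)) ?ltry.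
have L2fin : Lq_dist 2 p \is a fin_num.
  by rewrite ge0_fin_numE ?Lnorm_ge0 // (le_lt_trans L2) ?ltry.
have M0 : (0 <= abs_moment s p)%E.
  by apply: integral_ge0 => x _; rewrite lee_fin mulr_ge0 ?powR_ge0.
have Mfin : abs_moment s p \is a fin_num by rewrite ge0_fin_numE.
set a := fine (Lq_dist 1 p); set b := fine (Lq_dist 2 p); set m := fine (abs_moment s p).
have L1E : Lq_dist 1 p = a%:E by rewrite fineK.
have L2E : Lq_dist 2 p = b%:E by rewrite fineK.
have ME : abs_moment s p = m%:E by rewrite fineK.
have a0 : 0 <= a by rewrite -lee_fin -L1E Lnorm_ge0.
have b0 : 0 <= b by rewrite -lee_fin -L2E Lnorm_ge0.
have b1 : b <= 1 by rewrite -lee_fin -L2E.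
have E1 : (\int[lebesgue_measure]_x (`|p x - phi x|)%:E = a%:E)%E by rewrite -(@Lq1E R p).
have E2 : (\int[lebesgue_measure]_x ((p x - phi x) ^+ 2)%:E = (b ^+ 2)%:E)%E.
  by rewrite -(@Lq2E R p) L2E poweR_EFin powR_mulrn.
have m0 : 0 < m.
  have t0 : 0 < 2^-1 :> R by rewrite invr_gt0 ltr0n.
  have := @moment_lb R s p _ s2 t0 hp hm; rewrite ME -EFinM -EFinD lee_fin.
  have k0 : 0 <= (2^-1) ^+ 2 / (2^-1) `^ s :> R by rewrite divr_ge0 ?sqr_ge0 ?powR_ge0.
  have m0 : 0 <= m by rewrite -lee_fin -ME.
  rewrite expr2; nra.
have bound : forall w, 0 < w -> a <= w -> b <= w ->
    (Dgauss p <= (C1 R * w + C2 R * (m `^ (2 / s) * w `^ (1 - 2 / s)))%:E)%E.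
  move=> w w0 aw bw.
  have ui : 0 < (u0 R)^-1 by rewrite invr_gt0 (u0_gt0 R).
  have [u [/andP[uu u0'] [uw hb]]] : exists u, [/\ 0 < u <= u0 R, u <= w &
      b ^+ 2 * u^-1 <= w * (1 + (u0 R)^-1)].
    have [wu|uw] := lerP w (u0 R).
      exists w; split; rewrite ?w0 ?wu //.
      have q : b ^+ 2 * w^-1 <= b.
        rewrite expr2 -mulrA; apply: ler_piMr => //.
        by rewrite ler_pdivrMr // mul1r.
      nra.
    exists (u0 R); split; rewrite ?(u0_gt0 R) ?lexx ?ltW //.
    have : b ^+ 2 <= b by nra.
    nra.
  have [T [T1 [e1 e2]]] := @choose_T R u (ltac:(by rewrite uu u0')).
  have [t0 e3 e4] := @choose_t R s m w hs m0 w0.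
  set t := (m / w) `^ s^-1 in t0 e3 e4.
  apply: le_trans (@D_le R s p T t s2 hp T1 t0) _.
  rewrite E1 E2 -/(abs_moment s p) ME -!EFinM -!EFinD lee_fin -e4.
  apply: (@alg_core R s a b m w u t T) => //; rewrite ?a0 ?aw ?b0 ?bw ?uu //.
rewrite L1E L2E ME -EFinD.
have r01 : 0 < 1 - 2 / s < 1.
  apply/andP; split.
    by rewrite subr_gt0 ltr_pdivrMr // mul1r.
  by rewrite ltrBlDr ltrDl divr_gt0 // ltr0n.
have [ab0|ab0] := lerP (a + b) 0.
  have ab : a + b = 0 by apply/eqP; rewrite eq_le ab0 addr_ge0.
  have a00 : a = 0 by lra.
  have b00 : b = 0 by lra.
  have r0 : 1 - 2 / s != 0 by case/andP: r01 => r0 _; rewrite gt_eqF.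
  rewrite ab powR0 // !mulr0 addr0.
  apply/lee_addgt0Pr => e e0.
  have [w [w0 hw]] := @small_w R _ _ _ _ r01 (ltW (C1_gt0 R)) (mulr_ge0 (ltW (C2_gt0 R)) (powR_ge0 m (2 / s))) e0.
  apply: le_trans (bound w w0 _ _) _; [by rewrite a00 ltW|by rewrite b00 ltW|].
  by rewrite add0e lee_fin mulrA.
rewrite -[C2 R * _ * _]mulrA; apply: bound; lra.
Qed.
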